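(* Fix an association $\kappa$ in which every UE is served by at least one cell and every cell serves at least one UE, and fix a demand vector $\bm{d}\in\mathbb{R}^m_{>0}$. Let $\bm{p}\in\mathbb{R}^n_{>0}$, let $\alpha>1$, and set $\bm{p}'=\bm{p}/\alpha$. Let $\bm{x}$ be the fixed point $\bm{x}=\bm{f}(\bm{h}(\bm{x},\bm{p},\kappa),\bm{d},\kappa)$, and let $\bm{x}'$ be the fixed point $\bm{x}'=\bm{f}(\bm{h}(\bm{x}',\bm{p}',\kappa),\bm{d},\kappa)$. Then $\bm{p}'^{\mathsf T}\bm{x}'\le\bm{p}^{\mathsf T}\bm{x}$.
   Context: Cellular network model. $\mathcal{I}$ is a set of $n$ cells and $\mathcal{J}$ a set of $m$ UEs. For an association $\kappa\in\{0,1\}^{n\times m}$, let $\mathcal{I}_j=\{i:\kappa_{ij}=1\}$ and $\mathcal{J}_i=\{j:\kappa_{ij}=1\}$. $M,B>0$ are constants, $\sigma^2>0$ is the noise power and $g_{ij}>0$ are the channel gains. For $\bm{x}\in\mathbb{R}^n_{\ge0}$ and $\bm{p}\in\mathbb{R}^n_{>0}$: - $h_j(\bm{x},\bm{p},\kappa)=\dfrac{\sum_{i\in\mathcal{I}_j}p_ig_{ij}}{\sum_{k\in\mathcal{I}\setminus\mathcal{I}_j}p_kg_{kj}x_k+\sigma^2}$; - $f_i(\bm{\gamma},\bm{d},\kappa)=\sum_{j\in\mathcal{J}_i}\dfrac{d_j}{MB\log_2(1+\gamma_j)}$. It is known, and assumed here, that for fixed $\bm{p},\bm{d},\kappa$ the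 map $\bm{x}\mapsto\bm{f}(\bm{h}(\bm{x},\bm{p},\kappa),\bm{d},\kappa)$ has a unique fixed point in $\mathbb{R}^n_{\ge0}$. *)

(* Defs.v *)
From HB Require Import structures.
From mathcomp Require Import all_boot all_order all_algebra.
From mathcomp Require Import all_classical all_reals exp.
Set Implicit Arguments. Unset Strict Implicit. Unset Printing Implicit Defensive.
Import Order.TTheory GRing.Theory Num.Theory.
Local Open Scope ring_scope.

Definition log2 {R : realType} (y : R) : R := ln y / ln 2.

(* SINR-type map h_j(x,p,kappa); kappa i j = true iff cell i serves UE j *)
Definition hmap {R : realType} {n m : nat} (sigma2 : R) (g : 'I_n -> 'I_m -> R)
  (kappa : 'I_n -> 'I_m -> bool) (x p : 'I_n -> R) (j : 'I_m) : R :=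
  (\sum_(i < n | kappa i j) p i * g i j) /
  (\sum_(k < n | ~~ kappa k j) p k * g k j * x k + sigma2).

Definition fmap {R : realType} {n m : nat} (M B : R)
  (kappa : 'I_n -> 'I_m -> bool) (gamma d : 'I_m -> R) (i : 'I_n) : R :=
  \sum_(j < m | kappa i j) d j / (M * B * log2 (1 + gamma j)).

Definition is_fixed_point {R : realType} {n m : nat} (M B sigma2 : R)
  (g : 'I_n -> 'I_m -> R) (kappa : 'I_n -> 'I_m -> bool)
  (p : 'I_n -> R) (d : 'I_m -> R) (x : 'I_n -> R) : Prop :=
  (forall i, 0 <= x i) /\
  (forall i, x i = fmap M B kappa (hmap sigma2 g kappa x p) d i).

(* Main.v *)
Require Import Defs.
From HB Require Import structures.
From mathcomp Require Import all_boot all_order all_algebra.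
From mathcomp Require Import all_classical all_reals exp.
From mathcomp Require Import interval_inference convex ring lra.
Import Order.TTheory GRing.Theory Num.Theory.
Local Open Scope ring_scope.

Lemma ln_conc (R : realType) (t g : R) : 0 <= t -> t <= 1 -> 0 <= g ->
  t * ln (1+g) <= ln (1 + t*g).
Proof.
move=> t0 t1 g0.
have := @concave_ln R (Itv01 t0 t1) (1+g) 1 ltac:(lra) ltac:(lra).
rewrite !convRE /= ln1 mulr0 addr0 => H. apply: (le_trans H).
have ->: t * (1+g) + (1-t) * 1 = 1 + t*g by ring. by [].
Qed.

Lemma sum_pos (R : realType) (k : nat) (P : pred 'I_k) (F : 'I_k -> R) i0 :
  (forall i, P i -> 0 <= F i) -> P i0 -> 0 < F i0 ->
  0 < \sum_(i < k | P i) F i.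
Proof.
move=> H Pi0 Fi0; rewrite (bigD1 i0) //=.
apply: (lt_le_trans Fi0); rewrite lerDl sumr_ge0 // => i /andP[Pi _]; exact: H.
Qed.

Lemma key_term (R : realType) (M B d t gam h : R) :
  0 < M -> 0 < B -> 0 < d -> 0 < t -> t < 1 -> 0 < gam -> t * gam < h ->
  d / (M * B * log2 (1 + h)) < t^-1 * (d / (M * B * log2 (1 + gam))).
Proof.
move=> M0 B0 d0 t0 t1 g0 th.
have ln2 : 0 < ln (2 : R) by apply: ln_gt0; lra.
have Lg : 0 < ln (1 + gam) by apply: ln_gt0; lra.
have Lt : t * ln (1 + gam) < ln (1 + h).
  apply: (le_lt_trans (@ln_conc _ t gam (ltW t0) (ltW t1) (ltW g0))).
  by rewrite ltr_ln ?posrE; nra.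
have Lh : 0 < ln (1 + h) by apply: lt_trans Lt; apply: mulr_gt0.
rewrite /log2.
have -> : t^-1 * (d / (M * B * (ln (1 + gam) / ln 2))) =
          d / (M * B * ((t * ln (1 + gam)) / ln 2)).
  by field; rewrite !gt_eqF.
rewrite ltr_pM2l // ltf_pV2 ?posrE; last 2 first.
- by rewrite !mulr_gt0 // invr_gt0.
- by rewrite !mulr_gt0 // invr_gt0.
by rewrite ltr_pM2l ?mulr_gt0 // ltr_pM2r ?invr_gt0.
Qed.

Theorem theorem1 (R : realType) (n m : nat) (M B sigma2 : R)
  (g : 'I_n -> 'I_m -> R) (kappa : 'I_n -> 'I_m -> bool)
  (d : 'I_m -> R) (p : 'I_n -> R) (alpha : R) (x x' : 'I_n -> R) :
  0 < M -> 0 < B -> 0 < sigma2 ->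
  (forall i j, 0 < g i j) ->
  (forall j, exists i, kappa i j) ->
  (forall i, exists j, kappa i j) ->
  (forall j, 0 < d j) ->
  (forall i, 0 < p i) ->
  1 < alpha ->
  (* standing assumption: the fixed point exists and is unique, for every
     positive power vector *)
  (forall q : 'I_n -> R, (forall i, 0 < q i) ->
     forall y z, is_fixed_point M B sigma2 g kappa q d y ->
                 is_fixed_point M B sigma2 g kappa q d z -> y = z) ->
  is_fixed_point M B sigma2 g kappa p d x ->
  is_fixed_point M B sigma2 g kappa (fun i => p i / alpha) d x' ->
  \sum_(i < n) (p i / alpha) * x' i <= \sum_(i < n) p i * x i.
Proof.
move=> M0 B0 s0 g0 kj ki d0 p0 a1 _ [x0 Fx] [x'0 Fx'].
have a0 : 0 < alpha by lra.
pose N j := \sum_(i < n | kappa i j) p i * g i j.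
pose D j := \sum_(k < n | ~~ kappa k j) p k * g k j * x k.
have N0 j : 0 < N j.
  have [i ki'] := kj j.
  apply: (@sum_pos _ _ _ _ i) => // [k _|]; last by rewrite mulr_gt0.
  by rewrite ltW // mulr_gt0.
have D0 j : 0 <= D j.
  by apply: sumr_ge0 => k _; rewrite mulr_ge0 // ltW // mulr_gt0.
have gam0 j : 0 < hmap sigma2 g kappa x p j.
  by rewrite /hmap -/(N j) -/(D j) divr_gt0 //; have := D0 j; lra.
have term0 j : 0 < d j / (M * B * log2 (1 + hmap sigma2 g kappa x p j)).
  have L : 0 < log2 (1 + hmap sigma2 g kappa x p j).
    by rewrite /log2 divr_gt0 //; apply: ln_gt0; have := gam0 j; lra.
  by apply: divr_gt0 => //; apply: mulr_gt0 => //; apply: mulr_gt0.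
have xpos i : 0 < x i.
  rewrite Fx /fmap; have [j kij] := ki i.
  exact: (@sum_pos _ _ _ _ j (fun k _ => ltW (term0 k)) kij (term0 j)).
suff Hle : forall k, x' k <= alpha * x k.
  apply: ler_sum => k _.
  have -> : p k / alpha * x' k = p k * (x' k / alpha) by rewrite mulrAC mulrA.
  by rewrite ler_pM2l // ler_pdivrMr // mulrC.
move=> k.
pose r i := x' i / (alpha * x i).
case: (@arg_maxP _ R _ k xpredT r isT) => i0 _ Hmax.
set c := r i0.
have rk : forall j, x' j <= c * alpha * x j.
  move=> j; have : r j <= c := Hmax j isT.
  rewrite /r ler_pdivrMr ?mulr_gt0 ?xpos //.
  by rewrite mulrA.
have [c1|c1] := leP c 1.
  apply: (le_trans (rk k)); rewrite -mulrA ler_piMl //.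
  by rewrite mulr_ge0 // ltW.
exfalso.
have xi0 : x' i0 = c * alpha * x i0.
  by rewrite /c /r; field; rewrite !gt_eqF ?xpos.
have ca1 : 1 < c * alpha by nra.
have t0 : 0 < (c * alpha)^-1 by rewrite invr_gt0; lra.
have t1 : (c * alpha)^-1 < 1 by rewrite invf_lt1 //; lra.
have Hterm : forall j, kappa i0 j ->
    d j / (M * B * log2 (1 + hmap sigma2 g kappa x' (fun i => p i / alpha) j))
    < c * alpha * (d j / (M * B * log2 (1 + hmap sigma2 g kappa x p j))).
  move=> j _.
  rewrite -[c * alpha]invrK.
  apply: key_term => //.
  have HN : \sum_(i < n | kappa i j) p i / alpha * g i j = N j / alpha.
    rewrite /N big_distrl /=; apply: eq_bigr => i _; ring.
  have HD : \sum_(k0 < n | ~~ kappa k0 j) p k0 / alpha * g k0 j * x' k0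
            <= c * D j.
    rewrite /D big_distrr /=; apply: ler_sum => i _.
    have -> : c * (p i * g i j * x i) = p i / alpha * g i j * (c * alpha * x i).
      by field; rewrite gt_eqF.
    by rewrite ler_wpM2l // mulr_ge0 // ltW // ?divr_gt0.
  rewrite /hmap /= HN -/(N j) -/(D j).
  set D' := \sum_(k0 < n | ~~ kappa k0 j) _ in HD *.
  have hD' : 0 <= D'.
    rewrite /D'; apply: sumr_ge0 => i _; apply: mulr_ge0 (x'0 i).
    exact: mulr_ge0 (ltW (divr_gt0 (p0 i) a0)) (ltW (g0 i j)).
  have Dj := D0 j.
  apply: (@le_lt_trans _ _ (N j * (c * alpha * (D j + sigma2))^-1)).
    rewrite le_eqVlt; apply/orP; left; apply/eqP; field; repeat (apply/andP; split); apply/negP => /eqP; lra.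
  apply: (@lt_le_trans _ _ (N j * (alpha * (D' + sigma2))^-1)); last first.
    rewrite le_eqVlt; apply/orP; left; apply/eqP; field; repeat (apply/andP; split); apply/negP => /eqP; lra.
  rewrite ltr_pM2l // ltf_pV2 ?posrE; last 2 first.
  - by apply: mulr_gt0 => //; lra.
  - by apply: mulr_gt0; lra.
  have e1 : alpha * D' <= alpha * (c * D j) by rewrite ler_wpM2l // ltW.
  have e2 : alpha * sigma2 < c * (alpha * sigma2) by rewrite ltr_pMl // mulr_gt0.
  lra.
have : x' i0 < x' i0.
  rewrite {2}xi0 {1}Fx' /fmap Fx /fmap big_distrr /=.
  apply: ltr_sum => //.
  have [j kij] := ki i0.
  by apply/hasP; exists j => //; rewrite mem_index_enum.
by rewrite ltxx.
Qed.
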